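(* Let $\mathcal{G}_1,\dots,\mathcal{G}_m$ be signed digraphs on $\{1,\dots,n\}$ with signed Laplacians $L_1,\dots,L_m$, and assume each $L_k$ is weight balanced and each $-L_k$ is EEP. Let $Q\in\mathbb{R}^{(n-1)\times n}$ satisfy $QQ^\top=I_{n-1}$ and $Q\mathbf{1}=0$. If there exists a symmetric positive definite $P\in\mathbb{R}^{n\times n}$ such that \[ -QL_kPQ^\top-QPL_k^\top Q^\top\prec 0\quad\text{for all }k=1,\dots,m, \] then $\mathbb{L}=\{L_1,\dots,L_m\}$ is a consensus set for the switched system $\dot{\mathbf{x}}=-L_{\sigma(t)}\mathbf{x}$.
   Context: For a signed digraph with real weighted adjacency matrix $A$ (entries of any sign), the signed Laplacian is $L=\Sigma-A$, $\Sigma=\mathrm{diag}(\sigma_i)$, $\sigma_i=\sum_jA_{ij}$, so $L\mathbf{1}=0$; weight balanced means $L^\top\mathbf{1}=0$. $M$ is EEP if there is $t_0\ge0$ with $e^{Mt}$ entrywise positive for all real $t\ge t_0$. $X\prec0$ means $X$ is symmetric negative definite. A switching signal is a piecewise constant map $\sigma:[0,\infty)\to\{1,\dots,m\}$ with finitely many discontinuities on every bounded interval. $\mathbb{L}$ is a consensus set if for every switching signal and every $\mathbf{x}(0)$ there is $\alpha\in\mathbb{R}$ with $\lim_{t\to\infty}\mathbf{x}(t)=\alpha\mathbf{1}$. *)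

(* Defs.v *)
From HB Require Import structures.
From mathcomp Require Import all_boot all_order all_algebra.
From mathcomp Require Import all_classical all_reals all_analysis.
Set Implicit Arguments. Unset Strict Implicit. Unset Printing Implicit Defensive.
Import Order.TTheory GRing.Theory Num.Theory.
Import numFieldNormedType.Exports.
Local Open Scope ring_scope.
Local Open Scope classical_set_scope.

Section Defs.
Variable R : realType.

Definition ones (n : nat) : 'cV[R]_n := const_mx 1.

Definition signed_laplacian (n : nat) (A : 'M[R]_n) : 'M[R]_n :=
  \matrix_(i, j) ((i == j)%:R * (\sum_(l < n) A i l)) - A.

Definition weight_balanced (n : nat) (L : 'M[R]_n) : Prop :=
  L^T *m ones n = 0.

Definition expmx (n : nat) (M : 'M[R]_n) (t : R) : 'M[R]_n :=
  \matrix_(i, j) limn (fun N : nat =>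
      (\sum_(k < N) ((t ^+ k / (k`!)%:R) *: M ^+ k)) i j).

Definition EEP (n : nat) (M : 'M[R]_n) : Prop :=
  exists t0 : R, 0 <= t0 /\
    forall t : R, t0 <= t -> forall i j, 0 < expmx M t i j.

Definition pos_def (n : nat) (X : 'M[R]_n) : Prop :=
  X^T = X /\ forall v : 'cV[R]_n, v != 0 -> 0 < (v^T *m X *m v) 0 0.

Definition neg_def (n : nat) (X : 'M[R]_n) : Prop :=
  X^T = X /\ forall v : 'cV[R]_n, v != 0 -> (v^T *m X *m v) 0 0 < 0.

Definition loc_const (m : nat) (sigma : R -> 'I_m) (t : R) : Prop :=
  exists2 e : R, 0 < e & forall u : R, `|u - t| < e -> sigma u = sigma t.

(* switching signal: piecewise constant on [0, oo) with finitely many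
   discontinuities on every bounded interval: for every T, all points of
   (0, T] except finitely many are points where sigma is locally constant *)
Definition switching_signal (m : nat) (sigma : R -> 'I_m) : Prop :=
  forall T : R, exists s : seq R,
       forall t : R, 0 < t <= T -> t \notin s -> loc_const sigma t.

(* x is a (Caratheodory) solution on [0, oo) of dx/dt = - L_{sigma(t)} x:
   x is continuous on [0, oo), and at every t >= 0 where sigma is locally
   constant, t > 0, x is differentiable with derivative
   - L_{sigma t} x(t). *)
Definition switched_solution (n m : nat) (L : 'I_m -> 'M[R]_n)
    (sigma : R -> 'I_m) (x : R -> 'cV[R]_n) : Prop :=
  (forall i, {within [set t : R | 0 <= t], continuous (fun t => x t i 0)}) /\
  (forall t : R, 0 < t -> loc_const sigma t ->
     forall i, is_derive t 1 (fun s => x s i 0) ((- L (sigma t) *m x t) i 0)).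

Definition consensus_set (n m : nat) (L : 'I_m -> 'M[R]_n) : Prop :=
  forall sigma : R -> 'I_m, switching_signal sigma ->
  forall x : R -> 'cV[R]_n, switched_solution L sigma x ->
  exists alpha : R, forall i, (fun t => x t i 0) @ +oo --> alpha.

End Defs.

(* Main.v *)
Require Import Defs.
From HB Require Import structures.
From mathcomp Require Import all_boot all_order all_algebra.
From mathcomp Require Import all_classical all_reals all_analysis.
From mathcomp Require Import ring lra.
Import Order.TTheory GRing.Theory Num.Theory.
Import numFieldNormedType.Exports.
Set Implicit Arguments. Unset Strict Implicit. Unset Printing Implicit Defensive.
Local Open Scope ring_scope.
Local Open Scope classical_set_scope.

Section Good.
Variables (R : realType) (m : nat) (sigma : R -> 'I_m).
Definition Good (f df : R -> R) :=
  {within [set t : R | 0 <= t], continuous f} /\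
  (forall t, 0 < t -> loc_const sigma t -> is_derive t 1 f (df t)).

Lemma Good_add f df g dg : Good f df -> Good g dg ->
  Good (fun t => f t + g t) (fun t => df t + dg t).
Proof.
move=> [cf hf] [cg hg]; split.
  move=> x; exact: (continuousD (cf x) (cg x)).
move=> t t0 lt; exact: is_deriveD (hf _ t0 lt) (hg _ t0 lt).
Qed.

Lemma Good_mul f df g dg : Good f df -> Good g dg ->
  Good (fun t => f t * g t) (fun t => f t * dg t + g t * df t).
Proof.
move=> [cf hf] [cg hg]; split.
  move=> x; exact: (continuousM (cf x) (cg x)).
move=> t t0 lt; exact: is_deriveM (hf _ t0 lt) (hg _ t0 lt).
Qed.

Lemma Good_cst c : Good (fun=> c) (fun=> 0).
Proof.
split; first by move=> x; exact: cst_continuous.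
move=> t _ _; exact: is_derive_cst.
Qed.

Lemma Good_id : Good (fun t => t) (fun=> 1).
Proof.
split; first by apply: continuous_subspaceT => x; exact: cvg_id.
move=> t _ _; exact: is_derive_id.
Qed.

Lemma Good_ext f df g dg : Good f df -> f = g -> (forall t, df t = dg t) -> Good g dg.
Proof.
move=> [cf hf] <- e; split => // t t0 lt; rewrite -e; exact: hf.
Qed.

Lemma Good_sum n (f df : 'I_n -> R -> R) : (forall i, Good (f i) (df i)) ->
  Good (fun t => \sum_i f i t) (fun t => \sum_i df i t).
Proof.
move=> H; elim: n f df H => [|n IH] f df H.
  under eq_fun do rewrite big_ord0.
  under [fun t => \sum_(i < 0) _]eq_fun do rewrite big_ord0.
  exact: Good_cst.
under eq_fun do rewrite big_ord_recl.
under [fun t => \sum_(i < n.+1) df i t]eq_fun do rewrite big_ord_recl.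
apply: Good_add; first exact: H.
exact: (IH (fun i => f (lift ord0 i)) (fun i => df (lift ord0 i))).
Qed.

Definition GoodV {k} (u du : R -> 'cV[R]_k) :=
  forall i, Good (fun t => u t i 0) (fun t => du t i 0).

Lemma GoodV_mul p q (B : 'M[R]_(p, q)) u du : GoodV u du ->
  GoodV (fun t => B *m u t) (fun t => B *m du t).
Proof.
move=> H i.
apply: (Good_ext (@Good_sum _ (fun j t => B i j * u t j 0)
   (fun j t => B i j * du t j 0 + u t j 0 * 0)
   (fun j => Good_mul (Good_cst (B i j)) (H j)))).
  by apply: funext => t; rewrite mxE.
by move=> t; rewrite mxE; apply: eq_bigr => j _; rewrite mulr0 addr0.
Qed.

Lemma qf_sum k (u v : 'cV[R]_k) (X : 'M[R]_k) :
  (u^T *m X *m v) 0 0 = \sum_i \sum_j u i 0 * X i j * v j 0.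
Proof.
rewrite mxE; under eq_bigr do rewrite mxE big_distrl /=.
rewrite exchange_big /=; apply: eq_bigr => i _; apply: eq_bigr => j _.
by rewrite !mxE.
Qed.

Lemma GoodV_qf k (Y : 'M[R]_k) u du : GoodV u du ->
  Good (fun t => ((u t)^T *m Y *m u t) 0 0)
       (fun t => ((du t)^T *m Y *m u t + (u t)^T *m Y *m du t) 0 0).
Proof.
move=> H.
apply: (Good_ext (@Good_sum _ (fun i t => \sum_j u t i 0 * Y i j * u t j 0)
   (fun i t => \sum_j (u t i 0 * Y i j * du t j 0 + u t j 0 * (u t i 0 * 0 + Y i j * du t i 0)))
   (fun i => @Good_sum _ (fun j t => u t i 0 * Y i j * u t j 0)
   (fun j t => u t i 0 * Y i j * du t j 0 + u t j 0 * (u t i 0 * 0 + Y i j * du t i 0))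
   (fun j => Good_mul (Good_mul (H i) (Good_cst (Y i j))) (H j))))).
  by apply: funext => t; rewrite qf_sum.
move=> t; rewrite mxE !qf_sum -big_split /=; apply: eq_bigr => i _.
rewrite -big_split /=; apply: eq_bigr => j _; ring.
Qed.

Lemma Good_nonincr f df : Good f df -> switching_signal sigma ->
  (forall t, 0 < t -> loc_const sigma t -> df t <= 0) ->
  forall a b, 0 <= a -> a <= b -> f b <= f a.
Proof.
move=> [cf hf] sw hle aa b0 a00 ab0.
have [s hs] := sw b0.
suff H : forall (l : seq R) a b, 0 <= a -> a <= b -> b <= b0 ->
   (forall t, a < t < b -> t \in s -> t \in l) -> f b <= f a.
  exact: (H s aa b0 a00 ab0 (lexx _) (fun t _ h => h)).
elim=> [|p l IH] a b a0 ab bb0 hl.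
  have key : forall x, x \in `]a, b[%R -> 0 < x /\ loc_const sigma x.
    move=> x; rewrite in_itv /= => /andP[ax xb].
    have x0 : 0 < x by exact: le_lt_trans a0 ax.
    split => //; apply: hs.
      by rewrite x0 /= (le_trans (ltW xb) bb0).
    apply/negP => xs; by have := hl x; rewrite ax xb => /(_ isT xs).
  apply: (@ler0_derive1_nincr _ f a b) => //.
  - move=> x /key[x0 lx]; have := hf x x0 lx; by case.
  - move=> x /key[x0 lx]; have hd := hf x x0 lx.
    by rewrite derive1E derive_val; exact: hle.
  - apply: continuous_subspaceW cf => x /=; rewrite in_itv /= => /andP[+ _].
    exact: le_trans.
case: (boolP (a < p < b)) => [/andP[ap pb]|np].
  apply: (@le_trans _ _ (f p)).
    apply: (IH p b) => //; [exact: (le_trans a0 (ltW ap))|exact: ltW|].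
    move=> t /andP[pt tb] ts; have := hl t; rewrite (lt_trans ap pt) tb.
    move=> /(_ isT ts); rewrite in_cons => /orP[/eqP tp|//].
    by move: pt; rewrite tp ltxx.
  apply: (IH a p) => //; [exact: ltW| exact: le_trans (ltW pb) bb0|].
  move=> t /andP[hat tp] ts; have := hl t; rewrite hat (lt_trans tp pb).
  move=> /(_ isT ts); rewrite in_cons => /orP[/eqP tp'|//].
  by move: tp; rewrite tp' ltxx.
apply: (IH a b) => // t /andP[hat tb] ts; have := hl t; rewrite hat tb.
move=> /(_ isT ts); rewrite in_cons => /orP[/eqP tp|//].
by move: np; rewrite -tp hat tb.
Qed.
End Good.


Section LA.
Variable R : realType.


Lemma lap_ones k (A : 'M[R]_k) : signed_laplacian A *m ones R k = 0.
Proof.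
apply/matrixP => i j; rewrite !mxE.
under eq_bigr do rewrite !mxE mulr1.
rewrite sumrB (bigD1 i) //= eqxx mul1r [\sum_(i0 | i0 != i) _]big1 ?addr0 ?subrr // => l /negbTE.
by rewrite eq_sym => ->; rewrite mul0r.
Qed.

Lemma QTQ n (Q : 'M[R]_(n, n.+1)) : Q *m Q^T = 1%:M -> Q *m ones R n.+1 = 0 ->
  Q^T *m Q = 1%:M - ones R n.+1 *m ((n.+1)%:R^-1)%:M *m (ones R n.+1)^T.
Proof.
move=> QQ Q1.
pose C : 'M[R]_(1 + n, n.+1) := col_mx (ones R n.+1)^T Q.
pose D : 'M[R]_(1 + n) := block_mx ((n.+1)%:R^-1)%:M 0 0 1%:M.
have oo : (ones R n.+1)^T *m ones R n.+1 = ((n.+1)%:R)%:M.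
  apply/matrixP => i j; rewrite !mxE; under eq_bigr do rewrite !mxE mul1r.
  by rewrite (ord1 i) (ord1 j) sumr_const card_ord eqxx mulr1n.
have H1 : (C *m (C^T *m D) : 'M[R]_(n.+1)) = 1%:M.
  rewrite mulmxA /C tr_col_mx trmxK mul_col_row Q1 oo QQ.
  have -> : (ones R n.+1)^T *m Q^T = 0 by rewrite -trmx_mul Q1 trmx0.
  rewrite /D mulmx_block !mulmx0 !mul0mx !addr0 !add0r mulmx1.
  rewrite -scalar_mxM mulfV ?pnatr_eq0 //.
  by rewrite -scalar_mx_block.
have H2 := mulmx1C H1.
move: H2; rewrite /C /D tr_col_mx trmxK mul_row_block !mulmx0 !addr0 add0r mulmx1.
move=> H; rewrite -H; apply/eqP; rewrite eq_sym subr_eq addrC; apply/eqP.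
exact (@mul_row_col _ _ 1 n _ _ _ _ _).
Qed.
End LA.


Section LB.
Variable R : realType.

Lemma continuous_sum_fun (T : topologicalType) k (F : 'I_k -> T -> R) :
  (forall i, continuous (F i)) -> continuous (fun x => \sum_i F i x).
Proof.
elim: k F => [|k IH] F H.
  under eq_fun do rewrite big_ord0. exact: cst_continuous.
under eq_fun do rewrite big_ord_recl.
move=> x; apply: continuousD; first exact: H.
exact: (IH (fun i => F (lift ord0 i))).
Qed.

Lemma qf_continuous n (X : 'M[R]_n) :
  continuous (fun u : 'rV[R]_n => (u *m X *m u^T) 0 0).
Proof.
have -> : (fun u : 'rV[R]_n => (u *m X *m u^T) 0 0) =
   (fun u => \sum_i \sum_j (u 0 i * X i j * u 0 j)).
  apply: funext => u; rewrite mxE; under eq_bigr do rewrite mxE big_distrl /=.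
  rewrite exchange_big /=; apply: eq_bigr => i _; apply: eq_bigr => j _.
  by rewrite !mxE.
apply: continuous_sum_fun => i; apply: continuous_sum_fun => j x.
have h1 : {for x, continuous (fun u : 'rV[R]_n => u 0 i)} by exact: coord_continuous.
have h2 : {for x, continuous (fun u : 'rV[R]_n => u 0 j)} by exact: coord_continuous.
have h3 : {for x, continuous (fun u : 'rV[R]_n => X i j)} by exact: cst_continuous.
exact: (continuousM (continuousM h1 h3) h2).
Qed.

Lemma qf_lb n (X : 'M[R]_n) :
  exists c, (forall v : 'cV[R]_n, c * (v^T *m v) 0 0 <= (v^T *m X *m v) 0 0) /\
  ((forall v : 'cV[R]_n, v != 0 -> 0 < (v^T *m X *m v) 0 0) -> 0 < c).
Proof.
have nn : forall v : 'cV[R]_n, 0 <= (v^T *m v) 0 0.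
  move=> v; rewrite mxE sumr_ge0 // => i _; rewrite !mxE -expr2; exact: sqr_ge0.
have n0 : forall v : 'cV[R]_n, (v^T *m v) 0 0 = 0 -> v = 0.
  move=> v; rewrite mxE => /eqP; rewrite psumr_eq0; last first.
    by move=> i _; rewrite !mxE -expr2 sqr_ge0.
  move=> /allP h; apply/matrixP => i j; rewrite (ord1 j) mxE.
  by have := h i (mem_index_enum _); rewrite !mxE -expr2 sqrf_eq0 => /eqP.
case: (pselect (exists v : 'cV[R]_n, v != 0)) => [[v0 v00]|nz]; last first.
  exists 1; split => // v; have -> : v = 0 by apply/eqP; apply: contra_notT nz => h; exists v.
  by rewrite !(mul0mx, mulmx0) mxE mulr0.
pose f := fun u : 'rV[R]_n => (u *m X *m u^T) 0 0.
pose K := [set u : 'rV[R]_n | (u *m u^T) 0 0 = 1].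
have nrm : forall v : 'cV[R]_n, v != 0 ->
   K ((Num.sqrt ((v^T *m v) 0 0))^-1 *: v^T) /\
   f ((Num.sqrt ((v^T *m v) 0 0))^-1 *: v^T) = (v^T *m X *m v) 0 0 / (v^T *m v) 0 0.
  move=> v vn; have sp : 0 < (v^T *m v) 0 0.
    rewrite lt_def nn andbT; apply/eqP => /n0 vz; by rewrite vz eqxx in vn.
  have ss : (Num.sqrt ((v^T *m v) 0 0))^-1 ^+ 2 = ((v^T *m v) 0 0)^-1.
    by rewrite exprVn sqr_sqrtr // ltW.
  split.
    rewrite /K /= linearZ /= -scalemxAr -scalemxAl trmxK scalerA -expr2 ss.
    set s := (v^T *m v) in sp *; rewrite mxE.
    by rewrite mulVf // gt_eqF.
  rewrite /f linearZ /= -scalemxAr -!scalemxAl trmxK scalerA -expr2 ss.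
  set s := (v^T *m X *m v); rewrite mxE mulrC //.
have Kne : K !=set0 by exists ((Num.sqrt ((v0^T *m v0) 0 0))^-1 *: v0^T); case: (nrm v0 v00).
have Kc : compact K.
  have B := @rV_compact R n (fun=> `[-1, 1]) (fun i => @segment_compact R _ _).
  apply: (subclosed_compact _ B).
  - have -> : K = (fun u : 'rV[R]_n => (u *m 1%:M *m u^T) 0 0) @^-1` [set x | x = 1].
      by apply/funext => u; rewrite /K /preimage /= mulmx1.
    apply: preimage_closed.
      by move=> u _; exact: qf_continuous.
    exact: closed_eq.
  - move=> u /= Ku i; rewrite in_itv /= -ler_norml.
    rewrite -(@ler_pXn2r _ 2) ?nnegrE // expr1n -Ku real_normK ?num_real //.
    rewrite mxE (bigD1 i) //= !mxE -expr2 lerDl sumr_ge0 // => j _.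
    by rewrite !mxE -expr2 sqr_ge0.
have fc : {within K, continuous f} by apply: continuous_subspaceT; exact: qf_continuous.
have [u uK umin] := compact_EVT_min Kne Kc fc.
have Ku : K u by rewrite inE in uK.
have u0 : u^T != 0.
  apply/eqP => h; move: Ku; rewrite /K /= h mulmx0 mxE => /eqP; by rewrite eq_sym oner_eq0.
exists (f u); split; last first.
  by move=> pd; have := pd _ u0; rewrite trmxK.
move=> v; case: (eqVneq v 0) => [->|vn].
  by rewrite !(mul0mx, mulmx0) mxE mulr0.
have [Kv fv] := nrm v vn.
have := umin _ (mem_set Kv); rewrite fv.
have sp : 0 < (v^T *m v) 0 0.
  rewrite lt_def nn andbT; apply/eqP => /n0 vz; by rewrite vz eqxx in vn.
by rewrite ler_pdivlMr.
Qed.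

Lemma qf_ub n (X : 'M[R]_n) :
  exists2 C, 0 < C & forall v : 'cV[R]_n, (v^T *m X *m v) 0 0 <= C * (v^T *m v) 0 0.
Proof.
have [c [hc _]] := @qf_lb _ (- X).
exists (`|c| + 1); first by rewrite ltr_wpDl.
move=> v; have := hc v; rewrite mulmxN mulNmx (_ : (- (v^T *m X *m v)) 0 0 = - (v^T *m X *m v) 0 0); last by rewrite mxE.
rewrite lerNr => h.
apply: le_trans h _; rewrite -mulNr; apply: ler_wpM2r.
  rewrite mxE sumr_ge0 // => i _; rewrite !mxE -expr2; exact: sqr_ge0.
apply: le_trans (ler_norm _) _; rewrite normrN lerDl //.
Qed.

Lemma qf_lb_fam n (I : finType) (W : I -> 'M[R]_n) :
  (forall k (v : 'cV[R]_n), v != 0 -> 0 < (v^T *m W k *m v) 0 0) ->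
  exists2 c, 0 < c & forall k (v : 'cV[R]_n), c * (v^T *m v) 0 0 <= (v^T *m W k *m v) 0 0.
Proof.
move=> pd.
have nn : forall v : 'cV[R]_n, 0 <= (v^T *m v) 0 0.
  move=> v; rewrite mxE sumr_ge0 // => i _; rewrite !mxE -expr2; exact: sqr_ge0.
suff H : forall s : seq I, exists2 c, 0 < c & forall k, k \in s ->
   forall v : 'cV[R]_n, c * (v^T *m v) 0 0 <= (v^T *m W k *m v) 0 0.
  have [c c0 hc] := H (enum I); exists c => // k v; apply: hc; by rewrite mem_enum.
elim=> [|k s [c c0 hc]]; first by exists 1.
have [d [hd /(_ (pd k)) d0]] := @qf_lb _ (W k).
exists (Num.min c d); first by rewrite lt_min c0 d0.
move=> k'; rewrite in_cons => /orP[/eqP ->|ks] v.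
  apply: le_trans (hd v); apply: ler_wpM2r => //; by rewrite ge_min lexx orbT.
apply: le_trans (hc _ ks v); apply: ler_wpM2r => //; by rewrite ge_min lexx.
Qed.
End LB.


Lemma cvg_eps (R : realType) (f : R -> R) alpha :
  (forall e : R, 0 < e -> exists M : R, forall t, M < t -> `|alpha - f t| < e) ->
  f @ +oo --> alpha.
Proof.
move=> H; apply/cvgrPdist_lt => e e0; have [M hM] := H e e0.
exists M; split; [exact: num_real | exact: hM].
Qed.

Lemma conv_lemma (R : realType) n (B a : R) (Qi : 'I_n -> R)
    (y : R -> 'cV[R]_n) (f : R -> R) alpha :
  0 <= B -> 0 < a ->
  (forall t, 0 <= t -> (1 + a * t) * ((y t)^T *m y t) 0 0 <= B) ->
  (forall t, 0 <= t -> f t = \sum_j Qi j * y t j 0 + alpha) ->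
  f @ +oo --> alpha.
Proof.
move=> B0 a0 hb hf; apply: cvg_eps => e e0.
pose S := \sum_j `|Qi j|.
have S0 : 0 <= S by apply: sumr_ge0 => j _; exact: normr_ge0.
pose d := e / (S + 1).
have d0 : 0 < d by rewrite divr_gt0 // ltr_wpDl.
exists (B / (a * d ^+ 2)) => t tM.
have Md : 0 <= B / (a * d ^+ 2).
  apply: divr_ge0 => //; apply: mulr_ge0; [exact: ltW|exact: sqr_ge0].
have t0 : 0 <= t by exact: le_trans Md (ltW tM).
have nn : forall j, y t j 0 ^+ 2 <= ((y t)^T *m y t) 0 0.
  move=> j; rewrite mxE (bigD1 j) //= !mxE -expr2 lerDl sumr_ge0 // => l _.
  by rewrite !mxE -expr2 sqr_ge0.
have hyd : forall j, `|y t j 0| < d.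
  move=> j; rewrite -(@ltr_pXn2r _ 2) ?nnegrE ?normr_ge0 ?ltW // real_normK ?num_real //.
  apply: le_lt_trans (nn j) _.
  have h1 := hb t t0.
  have p1 : 0 < 1 + a * t by rewrite ltr_wpDr // mulr_ge0 // ltW.
  rewrite -(ltr_pM2l p1); apply: le_lt_trans h1 _.
  move: tM; rewrite (ltr_pdivrMr _ _ (mulr_gt0 a0 (exprn_gt0 2 d0))) => h.
  nra.
rewrite hf // (_ : alpha - _ = - \sum_j Qi j * y t j 0); last by ring.
rewrite normrN.
apply: le_lt_trans (ler_norm_sum _ _ _) _.
apply: (@le_lt_trans _ _ (\sum_j `|Qi j| * d)).
  apply: ler_sum => j _; rewrite normrM; apply: ler_wpM2l => //; exact: ltW.
rewrite -mulr_suml -/S /d mulrA ltr_pdivrMr ?ltr_wpDl //.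
nra.
Qed.

Theorem theorem9 (R : realType) (n m : nat)
    (A : 'I_m -> 'M[R]_(n.+1))
    (Q : 'M[R]_(n, n.+1)) :
  (forall k, weight_balanced (signed_laplacian (A k))) ->
  (forall k, EEP (- signed_laplacian (A k))) ->
  Q *m Q^T = 1%:M ->
  Q *m ones R n.+1 = 0 ->
  (exists P : 'M[R]_(n.+1), pos_def P /\
     forall k, neg_def (- (Q *m signed_laplacian (A k) *m P *m Q^T)
                        - (Q *m P *m (signed_laplacian (A k))^T *m Q^T))) ->
  consensus_set (fun k => signed_laplacian (A k)).
Proof.
move=> hwb _ QQ Q1 [P [[Psym Ppd] hneg]] sigma sw x [xc xd].
pose L k := signed_laplacian (A k).
pose M k := Q *m L k *m Q^T.
pose Pt := Q *m P *m Q^T.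
have L1 : forall k, L k *m ones R n.+1 = 0 by move=> k; exact: lap_ones.
have onesL : forall k, (ones R n.+1)^T *m L k = 0.
  move=> k; have := hwb k; rewrite /weight_balanced => h.
  by rewrite -[L k]trmxK -trmx_mul h trmx0.
have QTQe := QTQ QQ Q1.
have LQQ : forall k, L k *m (Q^T *m Q) = L k.
  by move=> k; rewrite QTQe mulmxBr mulmx1 !mulmxA L1 !mul0mx subr0.
have QQL : forall k, (Q^T *m Q) *m (L k)^T = (L k)^T.
  by move=> k; rewrite -{2}(LQQ k) !trmx_mul trmxK.
have MkP : forall k, Q *m L k *m P *m Q^T = M k *m Pt.
  move=> k; rewrite /M /Pt !mulmxA.
  by rewrite -(mulmxA (Q *m L k) Q^T Q) -(mulmxA Q (L k) (Q^T *m Q)) LQQ.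
have PLk : forall k, Q *m P *m (L k)^T *m Q^T = Pt *m (M k)^T.
  move=> k; rewrite /Pt /M !trmx_mul trmxK !mulmxA.
  rewrite -(mulmxA (Q *m P) Q^T Q) -(mulmxA (Q *m P) (Q^T *m Q) (L k)^T) QQL.
  by [].
have m00 : forall Y : 'M[R]_1, (- Y) 0 0 = - Y 0 0 by move=> Y; rewrite mxE.
have Ptsym : Pt^T = Pt by rewrite /Pt !trmx_mul trmxK Psym mulmxA.
have Ptpd : forall v : 'cV[R]_n, v != 0 -> 0 < (v^T *m Pt *m v) 0 0.
  move=> v vn; have h : Q^T *m v != 0.
    by apply: contraNneq vn => h; rewrite -[v]mul1mx -QQ -mulmxA h mulmx0.
  by have := Ppd _ h; rewrite trmx_mul trmxK /Pt !mulmxA.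
clearbody Pt.
have Ptu : Pt \in unitmx.
  rewrite -row_free_unit; apply: inj_row_free => w hw.
  apply/eqP; apply: contraT => wn.
  have wn' : w^T != 0 by apply: contraNneq wn => h; rewrite -[w]trmxK h trmx0.
  by have := Ptpd _ wn'; rewrite trmxK hw mul0mx mxE ltxx.
pose X := invmx Pt.
have hXP : X *m Pt = 1%:M := mulVmx Ptu.
have hPX : Pt *m X = 1%:M := mulmxV Ptu.
have conj : forall (Y : 'M[R]_n) (z : 'cV[R]_n),
    (Pt *m z)^T *m Y *m (Pt *m z) = z^T *m (Pt *m Y *m Pt) *m z.
  by move=> Y z; rewrite trmx_mul Ptsym !mulmxA.
have Xpd : forall v : 'cV[R]_n, v != 0 -> 0 < (v^T *m X *m v) 0 0.
  move=> v vn; have e : v = Pt *m (X *m v) by rewrite mulmxA hPX mul1mx.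
  have zn : X *m v != 0 by apply: contraNneq vn => h; rewrite e h mulmx0.
  rewrite e conj (_ : Pt *m X *m Pt = Pt) ?Ptpd //; by rewrite hPX mul1mx.
pose W k := X *m M k + (M k)^T *m X.
have Wpd : forall k (v : 'cV[R]_n), v != 0 -> 0 < (v^T *m W k *m v) 0 0.
  move=> k v vn; have e : v = Pt *m (X *m v) by rewrite mulmxA hPX mul1mx.
  have zn : X *m v != 0 by apply: contraNneq vn => h; rewrite e h mulmx0.
  rewrite e conj.
  have -> : Pt *m W k *m Pt = M k *m Pt + Pt *m (M k)^T.
    by rewrite /W mulmxDr mulmxDl !mulmxA hPX mul1mx -(mulmxA (Pt *m (M k)^T) X Pt) hXP mulmx1.
  have := (hneg k).2 (X *m v) zn.
  by rewrite MkP PLk -opprD mulmxN mulNmx m00 oppr_lt0.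
have [cW cW0 hW] := qf_lb_fam Wpd.
have [cX [hX /(_ Xpd) cX0]] := qf_lb X.
have [CX CX0 hCX] := qf_ub X.
have gx : GoodV sigma x (fun t => - L (sigma t) *m x t).
  move=> i; split; first exact: xc.
  move=> t t0 lt; exact: xd.
pose y t := Q *m x t.
have gy : GoodV sigma y (fun t => Q *m (- L (sigma t) *m x t)) := GoodV_mul Q gx.
have gV := GoodV_qf X gy.
have dyE : forall (k : 'I_m) (v : 'cV[R]_n.+1), Q *m (- L k *m v) = - (M k *m (Q *m v)).
  by move=> k v; rewrite /M mulNmx mulmxN -{1}(LQQ k) !mulmxA.
have nn : forall v : 'cV[R]_n, 0 <= (v^T *m v) 0 0.
  move=> v; rewrite mxE sumr_ge0 // => i _; rewrite !mxE -expr2; exact: sqr_ge0.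
have dVle : forall t, 0 < t -> loc_const sigma t ->
   (((Q *m (- L (sigma t) *m x t))^T *m X *m y t +
     (y t)^T *m X *m (Q *m (- L (sigma t) *m x t))) 0 0)
   <= - (cW * ((y t)^T *m y t) 0 0).
  move=> t _ _; rewrite dyE -/(y t).
  have -> : (- (M (sigma t) *m y t))^T *m X *m y t +
     (y t)^T *m X *m - (M (sigma t) *m y t) = - ((y t)^T *m W (sigma t) *m y t).
    rewrite /W linearN /= trmx_mul !mulNmx mulmxN mulmxDr mulmxDl opprD addrC.
    by rewrite !mulmxA.
  rewrite m00 lerN2; exact: hW.
pose a := cW / CX.
have a0 : 0 < a by rewrite divr_gt0.
have aC : a * CX = cW by rewrite /a divfK // gt_eqF.
pose V t := ((y t)^T *m X *m y t) 0 0.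
have gG := Good_mul (Good_add (Good_cst sigma 1)
   (Good_mul (Good_cst sigma a) (Good_id sigma))) gV.
have Gle := Good_nonincr gG sw.
have Vb : forall t, 0 <= t -> (1 + a * t) * V t <= V 0.
  move=> t t0; refine (le_trans (Gle _ 0 t (lexx 0) t0) _).
    2: by rewrite mulr0 addr0 mul1r.
  move=> u u0 lu; have h1 := dVle u u0 lu; have h2 := hCX (y u).
  have h3 := nn (y u).
  have p0 : 0 <= 1 + a * u by rewrite addr_ge0 // (mulr_ge0 (ltW a0) (ltW u0)).
  have p1 : 0 <= a * u * cW * ((y u)^T *m y u) 0 0.
    exact: (mulr_ge0 (mulr_ge0 (mulr_ge0 (ltW a0) (ltW u0)) (ltW cW0)) h3).
  have p2 := ler_wpM2l p0 h1.
  have p3 := ler_wpM2r (ltW a0) h2.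
  rewrite mulr1 mulr0 addr0 add0r.
  have e : CX * ((y u)^T *m y u) 0 0 * a = cW * ((y u)^T *m y u) 0 0.
    by rewrite -aC; ring.
  nra.
pose c t := ((ones R n.+1)^T *m x t) 0 0.
have dc0 : forall t, ((ones R n.+1)^T *m (- L (sigma t) *m x t)) = 0.
  by move=> t; rewrite mulmxA mulmxN onesL oppr0 mul0mx.
have c1 : forall t, 0 <= t -> c t <= c 0.
  move=> t t0; apply: (Good_nonincr (GoodV_mul (ones R n.+1)^T gx ord0) sw) => //.
  by move=> u _ _; rewrite dc0 mxE.
have c2 : forall t, 0 <= t -> c 0 <= c t.
  move=> t t0; have := (Good_nonincr (GoodV_mul (- (ones R n.+1)^T) gx ord0) sw).
  rewrite /c => /(_ _ 0 t (lexx 0) t0); rewrite !mulNmx !m00 lerN2; apply.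
  by move=> u _ _; rewrite mulNmx dc0 oppr0 mxE.
have cE : forall t, 0 <= t -> c t = c 0 by move=> t t0; apply/eqP; rewrite eq_le c1 ?c2.
have B0 : 0 <= V 0 / cX.
  by rewrite divr_ge0 ?(ltW cX0) // (le_trans _ (hX (y 0))) // mulr_ge0 // ltW.
exists ((n.+1)%:R^-1 * c 0) => i.
apply: (@conv_lemma R n (V 0 / cX) a (fun j => Q j i) y) => //.
  move=> t t0; rewrite ler_pdivlMr // mulrAC.
  apply: le_trans (Vb t t0); rewrite -mulrA; apply: ler_wpM2l; last exact: hX.
  by rewrite addr_ge0 // mulr_ge0 // ltW.
move=> t t0.
rewrite -(cE t t0) /y /c.
have ex : x t = Q^T *m (Q *m x t) +
    ones R n.+1 *m ((n.+1)%:R^-1)%:M *m ((ones R n.+1)^T *m x t).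
  by rewrite !mulmxA -mulmxDl QTQe subrK mul1mx.
rewrite {1}ex !mxE !big_ord1 !mxE; congr (_ + _).
  by apply: eq_bigr => j _; rewrite mxE.
rewrite big_ord1 /ones !mxE eqxx mulr1n mul1r.
by congr (_ * _); apply: eq_bigr => j _; rewrite !mxE.
Qed.
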